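(* Let $\mathbb{A}$ be a 2-category and $l:b\to e$ a 1-cell such that (1) $\mathbb{A}$ has the two-dimensional cokernel diagram of $l$ (with opcomma object $e\uparrow_l e$ and universal 1-cells $\delta^0,\delta^1:e\to e\uparrow_le$); (2) a left Kan extension of $l$ along $l$ exists (i.e. $l$ has a density comonad); (3) this left Kan extension is preserved by $\delta^1:e\to e\uparrow_le$. Then the co-semantic factorization of $l$ is isomorphic to the semantic lax descent factorization of $l$, either one existing if the other does.
   Context: A 2-category is a $\mathbf{Cat}$-enriched category; composition of 1-cells is juxtaposition, vertical composition of 2-cells is $\cdot$, horizontal composition is $\ast$, $\mathrm{id}_f$ is the identity 2-cell on $f$. $\mathbb{A}^{\mathrm{co}}$ is the 2-category obtained from $\mathbb{A}$ by reversing the 2-cells. For a 1-cell $p:e\to b$ (here applied with $l$ in place of $p$, $b$ replaced by $e$ and $e$ by $b$): an opcomma object of $p$ along itself is $b\uparrow_p b$ with $\delta^0,\delta^1:b\to b\uparrow_p b$ and $\alpha:\delta^1p\Rightarrow\delta^0p$ such that for every $y$, $h\mapsto(h\delta^0,h\delta^1,\mathrm{id}_h\ast\alpha)$, $\xi\mapsto(\xi\ast\mathrm{id}_{\delta^0},\xi\ast\mathrm{id}_{\delta^1})$ is an isomorphism from $\mathbb{A}(b\uparrow_pb,y)$ onto the category of triples $(h_0,h_1:b\to y,\beta:h_1p\Rightarrow h_0p)$ with morphisms pairs $(\xi_0,\xi_1)$ satisfying $(\xi_0\ast\mathrm{id}_p)\cdot\beta=\beta'\cdot(\xi_1\ast\mathrm{id}_p)$.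 A two-dimensional pushout of a span $f_0:c\to c_0$, $f_1:c\to c_1$ is $P$ with $q_0,q_1$, $q_0f_0=q_1f_1$, such that $k\mapsto(kq_0,kq_1)$ is an isomorphism from $\mathbb{A}(P,y)$ onto the category of pairs $(k_0,k_1)$ with $k_0f_0=k_1f_1$ and morphisms pairs of 2-cells $(\xi_0,\xi_1)$ with $\xi_0\ast\mathrm{id}_{f_0}=\xi_1\ast\mathrm{id}_{f_1}$. $\mathbb{A}$ has the two-dimensional cokernel diagram of $p$ if it has $b\uparrow_pb$ and a two-dimensional pushout $b\uparrow_pb\uparrow_pb$ of $(\delta^0,\delta^1)$ with $D^0,D^2$, $D^2\delta^0=D^0\delta^1$; $D^1$ is the unique 1-cell with $D^1\delta^1=D^2\delta^1$, $D^1\delta^0=D^0\delta^0$, $\mathrm{id}_{D^1}\ast\alpha=(\mathrm{id}_{D^0}\ast\alpha)\cdot(\mathrm{id}_{D^2}\ast\alpha)$; $s^0$ is the unique 1-cell with $s^0\delta^0=s^0\delta^1=\mathrm{id}_b$, $\mathrm{id}_{s^0}\ast\alpha=\mathrm{id}_p$. Semantic lax descent factorization: $\mathrm{Desc}_p(y)$ has objects $(h:y\to b,\beta:\delta^1h\Rightarrow\delta^0h)$ with $(\mathrm{id}_{D^0}\ast\beta)\cdot(\mathrm{id}_{D^2}\ast\beta)=\mathrm{id}_{D^1}\ast\beta$, $\mathrm{id}_{s^0}\ast\beta=\mathrm{id}_h$, morphisms 2-cells $\xi:h_1\Rightarrow h_0$ with $\beta_0\cdot(\mathrm{id}_{\delta^1}\ast\xi)=(\mathrm{id}_{\delta^0}\ast\xi)\cdot\beta_1$;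 a lax descent object is $L$ with $d:L\to b$, $\Psi:\delta^1d\Rightarrow\delta^0d$ such that $g\mapsto(dg,\Psi\ast\mathrm{id}_g)$, $\xi\mapsto \mathrm{id}_d\ast\xi$ is an isomorphism $\mathbb{A}(y,L)\cong\mathrm{Desc}_p(y)$ for all $y$; the semantic lax descent factorization is $p=d\,p^H$, with $p^H$ unique such that $dp^H=p$, $\Psi\ast\mathrm{id}_{p^H}=\alpha$. Right Kan extension of $f$ along $g$: a pair $(r,\gamma:rg\Rightarrow f)$ such that $\beta\mapsto\gamma\cdot(\beta\ast\mathrm{id}_g)$ is a bijection from 2-cells $k\Rightarrow r$ to 2-cells $kg\Rightarrow f$ for all $k$; a 1-cell $\delta$ preserves it if $(\delta r,\mathrm{id}_\delta\ast\gamma)$ is a right Kan extension of $\delta f$ along $g$. The codensity monad of $p$ (from a right Kan extension $(t,\gamma)$ of $p$ along $p$) is $(b,t,m,\eta)$ with $m$ unique such that $\gamma\cdot(m\ast\mathrm{id}_p)=\gamma\cdot(\mathrm{id}_t\ast\gamma)$ and $\eta$ unique with $\gamma\cdot(\eta\ast\mathrm{id}_p)=\mathrm{id}_p$. An Eilenberg–Moore object of a monad $(b,t,m,\eta)$ is $b^{\mathsf{T}}$ with $u:b^{\mathsf{T}}\to b$, $\mu:tu\Rightarrow u$ such that $g\mapsto(ug,\mu\ast\mathrm{id}_g)$ is an isomorphism from $\mathbb{A}(y,b^{\mathsf{T}})$ onto the category of pairs $(h,\beta:th\Rightarrow h)$ with $\beta\cdot(\mathrm{id}_t\ast\beta)=\beta\cdot(m\ast\mathrm{id}_h)$,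 $\beta\cdot(\eta\ast\mathrm{id}_h)=\mathrm{id}_h$ (morphisms: $\xi$ with $\xi\cdot\beta_1=\beta_0\cdot(\mathrm{id}_t\ast\xi)$); the semantic factorization of $p$ is $p=u\,p^{\mathsf{T}}$, $p^{\mathsf{T}}$ unique with $up^{\mathsf{T}}=p$, $\mu\ast\mathrm{id}_{p^{\mathsf{T}}}=\gamma$. Duals: a left Kan extension in $\mathbb{A}$ is a right Kan extension in $\mathbb{A}^{\mathrm{co}}$, and it is preserved by a 1-cell if that 1-cell preserves it as a right Kan extension in $\mathbb{A}^{\mathrm{co}}$; the density comonad of $l$ is the codensity monad of $l$ in $\mathbb{A}^{\mathrm{co}}$; its co-Eilenberg–Moore object is its Eilenberg–Moore object in $\mathbb{A}^{\mathrm{co}}$; the co-semantic factorization of $l$ is the semantic factorization of $l$ in $\mathbb{A}^{\mathrm{co}}$. Two factorizations $p=ac$ (through $X$) and $p=a'c'$ (through $X'$) are isomorphic if there is an isomorphism $\varphi:X\to X'$ with $a'\varphi=a$ and $\varphi c=c'$. *)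

(* Defs.v *)
(* Strict 2-categories (Cat-enriched categories), presented with a type of
   1-cells Hom a b and a type of 2-cells Cell a b equipped with source and
   target 1-cells.  Vertical / horizontal composition are total operations;
   their laws are only required where the composites make sense. *)
From Stdlib Require Import Utf8.

Set Implicit Arguments.

Record TwoCat := {
  Ob : Type;
  Hom : Ob -> Ob -> Type;
  Cell : Ob -> Ob -> Type;
  src : forall a b, Cell a b -> Hom a b;
  tgt : forall a b, Cell a b -> Hom a b;
  id1 : forall a, Hom a a;
  comp1 : forall a b c, Hom b c -> Hom a b -> Hom a c;
  id2 : forall a b, Hom a b -> Cell a b;
  vcomp : forall a b, Cell a b -> Cell a b -> Cell a b;
  hcomp : forall a b c, Cell b c -> Cell a b -> Cell a c;
  comp1_assoc : forall a b c d (h : Hom c d) (g : Hom b c) (f : Hom a b),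
      comp1 (comp1 h g) f = comp1 h (comp1 g f);
  comp1_id_l : forall a b (f : Hom a b), comp1 (id1 b) f = f;
  comp1_id_r : forall a b (f : Hom a b), comp1 f (id1 a) = f;
  src_id2 : forall a b (f : Hom a b), src (id2 f) = f;
  tgt_id2 : forall a b (f : Hom a b), tgt (id2 f) = f;
  src_vcomp : forall a b (be al : Cell a b), tgt al = src be -> src (vcomp be al) = src al;
  tgt_vcomp : forall a b (be al : Cell a b), tgt al = src be -> tgt (vcomp be al) = tgt be;
  vcomp_assoc : forall a b (ga be al : Cell a b), tgt al = src be -> tgt be = src ga ->
      vcomp (vcomp ga be) al = vcomp ga (vcomp be al);
  vcomp_id_l : forall a b (al : Cell a b), vcomp (id2 (tgt al)) al = al;
  vcomp_id_r : forall a b (al : Cell a b), vcomp al (id2 (src al)) = al;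
  src_hcomp : forall a b c (be : Cell b c) (al : Cell a b),
      src (hcomp be al) = comp1 (src be) (src al);
  tgt_hcomp : forall a b c (be : Cell b c) (al : Cell a b),
      tgt (hcomp be al) = comp1 (tgt be) (tgt al);
  hcomp_assoc : forall a b c d (ga : Cell c d) (be : Cell b c) (al : Cell a b),
      hcomp (hcomp ga be) al = hcomp ga (hcomp be al);
  hcomp_id_l : forall a b (al : Cell a b), hcomp (id2 (id1 b)) al = al;
  hcomp_id_r : forall a b (al : Cell a b), hcomp al (id2 (id1 a)) = al;
  hcomp_id2 : forall a b c (g : Hom b c) (f : Hom a b),
      hcomp (id2 g) (id2 f) = id2 (comp1 g f);
  interchange : forall a b c (be' al' : Cell b c) (be al : Cell a b),
      tgt al' = src be' -> tgt al = src be ->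
      hcomp (vcomp be' al') (vcomp be al) = vcomp (hcomp be' be) (hcomp al' al)
}.

Arguments Hom {t} a b.
Arguments Cell {t} a b.
Arguments src {t a b} _.
Arguments tgt {t a b} _.
Arguments id1 {t} a.
Arguments comp1 {t a b c} _ _.
Arguments id2 {t a b} _.
Arguments vcomp {t a b} _ _.
Arguments hcomp {t a b c} _ _.

Declare Scope twocat_scope.
Open Scope twocat_scope.
Notation "g ∘ f" := (comp1 g f) (at level 40, left associativity) : twocat_scope.
Notation "be · al" := (vcomp be al) (at level 50, left associativity) : twocat_scope.
Notation "be ∗ al" := (hcomp be al) (at level 45, left associativity) : twocat_scope.

Definition co (A : TwoCat) : TwoCat.
Proof.
  refine {| Ob := Ob A; Hom := @Hom A; Cell := @Cell A;
            src := fun a b al => @tgt A a b al; tgt := fun a b al => @src A a b al;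
            id1 := @id1 A; comp1 := @comp1 A; id2 := @id2 A;
            vcomp := fun a b be al => @vcomp A a b al be;
            hcomp := @hcomp A |}.
  - intros; apply comp1_assoc.
  - intros; apply comp1_id_l.
  - intros; apply comp1_id_r.
  - intros; apply tgt_id2.
  - intros; apply src_id2.
  - intros a b be al H; apply tgt_vcomp; symmetry; exact H.
  - intros a b be al H; apply src_vcomp; symmetry; exact H.
  - intros a b ga be al H1 H2; symmetry; apply vcomp_assoc; symmetry; assumption.
  - intros; apply vcomp_id_r.
  - intros; apply vcomp_id_l.
  - intros; apply tgt_hcomp.
  - intros; apply src_hcomp.
  - intros; apply hcomp_assoc.
  - intros; apply hcomp_id_l.
  - intros; apply hcomp_id_r.
  - intros; apply hcomp_id2.
  - intros a b c be' al' be al H1 H2; apply interchange; symmetry; assumption.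
Defined.

Section Notions.
Context {A : TwoCat}.

Definition cell2 {a b : Ob A} (al : Cell a b) (f g : Hom a b) : Prop :=
  src al = f /\ tgt al = g.

Definition OpComma {x z : Ob A} (p : Hom x z) (P : Ob A) (d0 d1 : Hom z P)
    (al : Cell x P) : Prop :=
  cell2 al (d1 ∘ p) (d0 ∘ p) /\
  forall y : Ob A,
    (forall (h0 h1 : Hom z y) (be : Cell x y), cell2 be (h1 ∘ p) (h0 ∘ p) ->
       exists! h : Hom P y, h ∘ d0 = h0 /\ h ∘ d1 = h1 /\ id2 h ∗ al = be) /\
    (forall (h h' : Hom P y) (xi0 xi1 : Cell z y),
       cell2 xi0 (h ∘ d0) (h' ∘ d0) -> cell2 xi1 (h ∘ d1) (h' ∘ d1) ->
       (xi0 ∗ id2 p) · (id2 h ∗ al) = (id2 h' ∗ al) · (xi1 ∗ id2 p) ->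
       exists! xi : Cell P y, cell2 xi h h' /\ xi ∗ id2 d0 = xi0 /\ xi ∗ id2 d1 = xi1).

Definition Pushout2 {c c0 c1 : Ob A} (f0 : Hom c c0) (f1 : Hom c c1) (Pq : Ob A)
    (q0 : Hom c0 Pq) (q1 : Hom c1 Pq) : Prop :=
  q0 ∘ f0 = q1 ∘ f1 /\
  forall y : Ob A,
    (forall (k0 : Hom c0 y) (k1 : Hom c1 y), k0 ∘ f0 = k1 ∘ f1 ->
       exists! k : Hom Pq y, k ∘ q0 = k0 /\ k ∘ q1 = k1) /\
    (forall (k k' : Hom Pq y) (xi0 : Cell c0 y) (xi1 : Cell c1 y),
       cell2 xi0 (k ∘ q0) (k' ∘ q0) -> cell2 xi1 (k ∘ q1) (k' ∘ q1) ->
       xi0 ∗ id2 f0 = xi1 ∗ id2 f1 ->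
       exists! xi : Cell Pq y, cell2 xi k k' /\ xi ∗ id2 q0 = xi0 /\ xi ∗ id2 q1 = xi1).

Definition CokernelDiagram {x z : Ob A} (p : Hom x z) (P : Ob A) (d0 d1 : Hom z P)
    (al : Cell x P) (Q : Ob A) (D0 D1 D2 : Hom P Q) (s0 : Hom P z) : Prop :=
  OpComma p P d0 d1 al /\
  Pushout2 d0 d1 Q D2 D0 /\
  (D1 ∘ d1 = D2 ∘ d1 /\ D1 ∘ d0 = D0 ∘ d0 /\
   id2 D1 ∗ al = (id2 D0 ∗ al) · (id2 D2 ∗ al)) /\
  (s0 ∘ d0 = id1 z /\ s0 ∘ d1 = id1 z /\ id2 s0 ∗ al = id2 p).

Definition DescDatum {z P Q y : Ob A} (d0 d1 : Hom z P) (D0 D1 D2 : Hom P Q)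
    (s0 : Hom P z) (h : Hom y z) (be : Cell y P) : Prop :=
  cell2 be (d1 ∘ h) (d0 ∘ h) /\
  (id2 D0 ∗ be) · (id2 D2 ∗ be) = id2 D1 ∗ be /\
  id2 s0 ∗ be = id2 h.

Definition LaxDescentObject {z P Q : Ob A} (d0 d1 : Hom z P) (D0 D1 D2 : Hom P Q)
    (s0 : Hom P z) (L : Ob A) (d : Hom L z) (Psi : Cell L P) : Prop :=
  DescDatum d0 d1 D0 D1 D2 s0 d Psi /\
  forall y : Ob A,
    (forall (h : Hom y z) (be : Cell y P), DescDatum d0 d1 D0 D1 D2 s0 h be ->
       exists! g : Hom y L, d ∘ g = h /\ Psi ∗ id2 g = be) /\
    (forall (g1 g0 : Hom y L) (xi : Cell y z), cell2 xi (d ∘ g1) (d ∘ g0) ->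
       (Psi ∗ id2 g0) · (id2 d1 ∗ xi) = (id2 d0 ∗ xi) · (Psi ∗ id2 g1) ->
       exists! ze : Cell y L, cell2 ze g1 g0 /\ id2 d ∗ ze = xi).

Definition LaxDescFact {x z : Ob A} (p : Hom x z) (P : Ob A) (d0 d1 : Hom z P)
    (al : Cell x P) (Q : Ob A) (D0 D1 D2 : Hom P Q) (s0 : Hom P z)
    (L : Ob A) (d : Hom L z) (c : Hom x L) : Prop :=
  exists Psi : Cell L P,
    LaxDescentObject d0 d1 D0 D1 D2 s0 L d Psi /\ d ∘ c = p /\ Psi ∗ id2 c = al.

Definition RightKan {x y z : Ob A} (f : Hom x z) (g : Hom x y) (r : Hom y z)
    (ga : Cell x z) : Prop :=
  cell2 ga (r ∘ g) f /\
  forall (k : Hom y z) (de : Cell x z), cell2 de (k ∘ g) f ->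
    exists! be : Cell y z, cell2 be k r /\ ga · (be ∗ id2 g) = de.

Definition PreservesRightKan {x y z w : Ob A} (de : Hom z w) (f : Hom x z)
    (g : Hom x y) (r : Hom y z) (ga : Cell x z) : Prop :=
  RightKan (de ∘ f) g (de ∘ r) (id2 de ∗ ga).

Definition CodensityMonad {x z : Ob A} (p : Hom x z) (t : Hom z z) (ga : Cell x z)
    (m eta : Cell z z) : Prop :=
  RightKan p p t ga /\
  cell2 m (t ∘ t) t /\ ga · (m ∗ id2 p) = ga · (id2 t ∗ ga) /\
  cell2 eta (id1 z) t /\ ga · (eta ∗ id2 p) = id2 p.

Definition Algebra {z y : Ob A} (t : Hom z z) (m eta : Cell z z)
    (h : Hom y z) (be : Cell y z) : Prop :=
  cell2 be (t ∘ h) h /\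
  be · (id2 t ∗ be) = be · (m ∗ id2 h) /\
  be · (eta ∗ id2 h) = id2 h.

Definition EMObject {z : Ob A} (t : Hom z z) (m eta : Cell z z)
    (X : Ob A) (u : Hom X z) (mu : Cell X z) : Prop :=
  Algebra t m eta u mu /\
  forall y : Ob A,
    (forall (h : Hom y z) (be : Cell y z), Algebra t m eta h be ->
       exists! g : Hom y X, u ∘ g = h /\ mu ∗ id2 g = be) /\
    (forall (g1 g0 : Hom y X) (xi : Cell y z), cell2 xi (u ∘ g1) (u ∘ g0) ->
       xi · (mu ∗ id2 g1) = (mu ∗ id2 g0) · (id2 t ∗ xi) ->
       exists! ze : Cell y X, cell2 ze g1 g0 /\ id2 u ∗ ze = xi).

Definition SemFact {x z : Ob A} (p : Hom x z) (t : Hom z z) (ga : Cell x z)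
    (m eta : Cell z z) (X : Ob A) (u : Hom X z) (c : Hom x X) : Prop :=
  exists mu : Cell X z, EMObject t m eta X u mu /\ u ∘ c = p /\ mu ∗ id2 c = ga.

Definition FactIso {x z : Ob A} (X X' : Ob A) (a : Hom X z) (c : Hom x X)
    (a' : Hom X' z) (c' : Hom x X') : Prop :=
  exists (phi : Hom X X') (psi : Hom X' X),
    psi ∘ phi = id1 X /\ phi ∘ psi = id1 X' /\ a' ∘ phi = a /\ phi ∘ c = c'.

End Notions.

Definition LeftKan {A : TwoCat} {x y z : Ob A} (f : Hom x z) (g : Hom x y)
    (r : Hom y z) (ga : Cell x z) : Prop :=
  @RightKan (co A) x y z f g r ga.

Definition PreservesLeftKan {A : TwoCat} {x y z w : Ob A} (de : Hom z w)
    (f : Hom x z) (g : Hom x y) (r : Hom y z) (ga : Cell x z) : Prop :=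
  @PreservesRightKan (co A) x y z w de f g r ga.

Definition DensityComonad {A : TwoCat} {x z : Ob A} (p : Hom x z) (t : Hom z z)
    (ga : Cell x z) (m eta : Cell z z) : Prop :=
  @CodensityMonad (co A) x z p t ga m eta.

Definition CoSemFact {A : TwoCat} {x z : Ob A} (p : Hom x z) (t : Hom z z)
    (ga : Cell x z) (m eta : Cell z z) (X : Ob A) (u : Hom X z) (c : Hom x X) : Prop :=
  @SemFact (co A) x z p t ga m eta X u c.

(* Main.v *)
Require Import Defs.
From Stdlib Require Import Utf8 Setoid.
Set Implicit Arguments.

Section Gen.
Context {A : TwoCat}.

Lemma cassoc {a b c d : Ob A} (h : Hom c d) (g : Hom b c) (f : Hom a b) :
  (h ∘ g) ∘ f = h ∘ (g ∘ f).
Proof. apply comp1_assoc. Qed.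
Lemma cidl {a b : Ob A} (f : Hom a b) : id1 b ∘ f = f.
Proof. apply comp1_id_l. Qed.
Lemma cidr {a b : Ob A} (f : Hom a b) : f ∘ id1 a = f.
Proof. apply comp1_id_r. Qed.
Lemma ext1 {a b c : Ob A} {f : Hom b c} {g : Hom a b} {k : Hom a c} :
  f ∘ g = k -> forall w (x : Hom w a), f ∘ (g ∘ x) = k ∘ x.
Proof. intros H w x. rewrite <- cassoc, H. reflexivity. Qed.

Lemma c_id {x y : Ob A} (f : Hom x y) : cell2 (id2 f) f f.
Proof. split; [apply src_id2|apply tgt_id2]. Qed.
Lemma c_v {x y : Ob A} (a b : Cell x y) f g g' h :
  cell2 a f g -> cell2 b g' h -> g = g' -> cell2 (b · a) f h.
Proof.
  intros [Ha1 Ha2] [Hb1 Hb2] E; subst.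
  split; [rewrite src_vcomp|rewrite tgt_vcomp]; congruence.
Qed.
Lemma c_h {x y z : Ob A} (b : Cell y z) (a : Cell x y) f g f' g' :
  cell2 a f g -> cell2 b f' g' -> cell2 (b ∗ a) (f' ∘ f) (g' ∘ g).
Proof.
  intros [Ha1 Ha2] [Hb1 Hb2]; split; [rewrite src_hcomp|rewrite tgt_hcomp]; congruence.
Qed.
Lemma c_conv {x y : Ob A} (a : Cell x y) f g f' g' :
  cell2 a f g -> f = f' -> g = g' -> cell2 a f' g'.
Proof. intros H E1 E2; subst; exact H. Qed.

Lemma vidl {x y : Ob A} (a : Cell x y) f g : cell2 a f g -> id2 g · a = a.
Proof. intros [H1 H2]; subst; apply vcomp_id_l. Qed.
Lemma vidr {x y : Ob A} (a : Cell x y) f g : cell2 a f g -> a · id2 f = a.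
Proof. intros [H1 H2]; subst; apply vcomp_id_r. Qed.
Lemma vass {x y : Ob A} (a b c : Cell x y) f g g' h h' i :
  cell2 a f g -> cell2 b g' h -> cell2 c h' i -> g = g' -> h = h' ->
  (c · b) · a = c · (b · a).
Proof.
  intros [Ha1 Ha2] [Hb1 Hb2] [Hc1 Hc2] E1 E2; subst.
  apply vcomp_assoc; congruence.
Qed.
Lemma ichg {x y z : Ob A} (a b : Cell x y) (a' b' : Cell y z) f g g' h f' k k' h' :
  cell2 a f g -> cell2 b g' h -> cell2 a' f' k -> cell2 b' k' h' -> g = g' -> k = k' ->
  (b' · a') ∗ (b · a) = (b' ∗ b) · (a' ∗ a).
Proof.
  intros [Ha1 Ha2] [Hb1 Hb2] [Hc1 Hc2] [Hd1 Hd2] E1 E2; subst.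
  apply interchange; congruence.
Qed.
Lemma xchg1 {x y z : Ob A} (a : Cell x y) (b : Cell y z) f g f' g' :
  cell2 a f g -> cell2 b f' g' -> b ∗ a = (b ∗ id2 g) · (id2 f' ∗ a).
Proof.
  intros Ha Hb.
  rewrite <- (vidr Hb) at 1. rewrite <- (vidl Ha) at 1.
  eapply ichg; eauto using c_id.
Qed.
Lemma xchg2 {x y z : Ob A} (a : Cell x y) (b : Cell y z) f g f' g' :
  cell2 a f g -> cell2 b f' g' -> b ∗ a = (id2 g' ∗ a) · (b ∗ id2 f).
Proof.
  intros Ha Hb.
  rewrite <- (vidl Hb) at 1. rewrite <- (vidr Ha) at 1.
  eapply ichg; eauto using c_id.
Qed.
Lemma idid {x y : Ob A} (f : Hom x y) : id2 f · id2 f = id2 f.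
Proof. exact (vidl (c_id f)). Qed.
Lemma whl {x y z : Ob A} (k : Hom y z) (a b : Cell x y) f g g' h :
  cell2 a f g -> cell2 b g' h -> g = g' ->
  id2 k ∗ (b · a) = (id2 k ∗ b) · (id2 k ∗ a).
Proof.
  intros Ha Hb E. rewrite <- (idid k) at 1. eapply ichg; eauto using c_id.
Qed.
Lemma whr {x y z : Ob A} (k : Hom x y) (a b : Cell y z) f g g' h :
  cell2 a f g -> cell2 b g' h -> g = g' ->
  (b · a) ∗ id2 k = (b ∗ id2 k) · (a ∗ id2 k).
Proof.
  intros Ha Hb E. rewrite <- (idid k) at 1. eapply ichg; eauto using c_id.
Qed.
Lemma hid {x y z w : Ob A} (g : Hom z w) (f : Hom y z) (a : Cell x y) :
  id2 g ∗ (id2 f ∗ a) = id2 (g ∘ f) ∗ a.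
Proof. rewrite <- hcomp_assoc, hcomp_id2. reflexivity. Qed.
Lemma hass {a b c d : Ob A} (ga : Cell c d) (be : Cell b c) (al : Cell a b) :
  (ga ∗ be) ∗ al = ga ∗ (be ∗ al).
Proof. apply hcomp_assoc. Qed.
Lemma hidl {a b : Ob A} (al : Cell a b) : id2 (id1 b) ∗ al = al.
Proof. apply hcomp_id_l. Qed.
Lemma hidr {a b : Ob A} (al : Cell a b) : al ∗ id2 (id1 a) = al.
Proof. apply hcomp_id_r. Qed.
Lemma hid2 {a b c : Ob A} (g : Hom b c) (f : Hom a b) : id2 g ∗ id2 f = id2 (g ∘ f).
Proof. apply hcomp_id2. Qed.
Lemma hext {x y z w : Ob A} {a : Cell z w} {b : Cell y z} {c : Cell y w} :
  a ∗ b = c -> forall (v : Cell x y), a ∗ (b ∗ v) = c ∗ v.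
Proof. intros H v. rewrite <- hass, H. reflexivity. Qed.
Lemma hext2 {x y z w : Ob A} {a : Cell y z} {f : Hom x y} {c : Cell x z} :
  a ∗ id2 f = c -> forall (g : Hom w x), a ∗ id2 (f ∘ g) = c ∗ id2 g.
Proof. intros H g. rewrite <- hid2, <- hass, H. reflexivity. Qed.
Lemma hext3 {x y z w : Ob A} {g : Hom y z} {a : Cell x y} {c : Cell x z} :
  id2 g ∗ a = c -> forall (f : Hom z w), id2 (f ∘ g) ∗ a = id2 f ∗ c.
Proof. intros H f. rewrite <- hid, H. reflexivity. Qed.
End Gen.

Ltac infer :=
  match goal with
  | |- cell2 (vcomp _ _) _ _ => eapply c_v; [infer | infer | ]
  | |- cell2 (hcomp _ _) _ _ => eapply c_h; [infer | infer]
  | |- cell2 (id2 _) _ _ => apply c_id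
  | _ => eassumption
  end.


Unset Strict Implicit.
Section Inner.
Context {A : TwoCat} {b e P Q : Ob A} (l : Hom b e) (d0 d1 : Hom e P) (al : Cell b P)
  (D0 D1 D2 : Hom P Q) (s0 : Hom P e) (t : Hom e e) (ga : Cell b e) (m eta : Cell e e)
  (r : Hom P e) (sg : Cell e P) (xi : Cell P P) (R' : Hom Q P) (eps : Cell Q Q).
Hypothesis Hal : cell2 al (d1 ∘ l) (d0 ∘ l).
Hypothesis Hs0d0 : s0 ∘ d0 = id1 e.
Hypothesis Hs0d1 : s0 ∘ d1 = id1 e.
Hypothesis Hs0al : id2 s0 ∗ al = id2 l.
Hypothesis HD : D2 ∘ d0 = D0 ∘ d1.
Hypothesis HD1d1 : D1 ∘ d1 = D2 ∘ d1.
Hypothesis HD1d0 : D1 ∘ d0 = D0 ∘ d0.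
Hypothesis HD1al : id2 D1 ∗ al = (id2 D0 ∗ al) · (id2 D2 ∗ al).
Hypothesis Hga : cell2 ga l (t ∘ l).
Hypothesis Hkan : forall (k : Hom e e) (b1 b2 : Cell e e), cell2 b1 t k -> cell2 b2 t k ->
  (b1 ∗ id2 l) · ga = (b2 ∗ id2 l) · ga -> b1 = b2.
Hypothesis Hkan1 : forall (k : Hom e P) (b1 b2 : Cell e P), cell2 b1 (d1 ∘ t) k -> cell2 b2 (d1 ∘ t) k ->
  (b1 ∗ id2 l) · (id2 d1 ∗ ga) = (b2 ∗ id2 l) · (id2 d1 ∗ ga) -> b1 = b2.
Hypothesis Hm : cell2 m t (t ∘ t).
Hypothesis Hm2 : (m ∗ id2 l) · ga = (id2 t ∗ ga) · ga.
Hypothesis Heta : cell2 eta t (id1 e).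
Hypothesis Heta2 : (eta ∗ id2 l) · ga = id2 l.
Hypothesis Hrd0 : r ∘ d0 = t.
Hypothesis Hrd1 : r ∘ d1 = id1 e.
Hypothesis Hral : id2 r ∗ al = ga.
Hypothesis Hsg : cell2 sg (d1 ∘ t) d0.
Hypothesis Hsg2 : (sg ∗ id2 l) · (id2 d1 ∗ ga) = al.
Hypothesis Hxi : cell2 xi (d1 ∘ r) (id1 P).
Hypothesis Hxi0 : xi ∗ id2 d0 = sg.
Hypothesis Hxi1 : xi ∗ id2 d1 = id2 d1.
Hypothesis HR2 : R' ∘ D2 = id1 P.
Hypothesis HR0 : R' ∘ D0 = d0 ∘ r.
Hypothesis Heps : cell2 eps (D2 ∘ R') (id1 Q).
Hypothesis Heps2 : eps ∗ id2 D2 = id2 D2.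
Hypothesis Heps0 : eps ∗ id2 D0 = id2 D0 ∗ xi.

Ltac hn := repeat progress rewrite ?cassoc, ?cidl, ?cidr,
   ?Hs0d0, ?(ext1 Hs0d0), ?Hs0d1, ?(ext1 Hs0d1), ?HD, ?(ext1 HD),
   ?HD1d1, ?(ext1 HD1d1), ?HD1d0, ?(ext1 HD1d0), ?Hrd0, ?(ext1 Hrd0),
   ?Hrd1, ?(ext1 Hrd1), ?HR2, ?(ext1 HR2), ?HR0, ?(ext1 HR0).
Ltac homeq := hn; reflexivity.
Ltac ty := eapply c_conv; [infer | ..]; homeq.
Ltac side := match goal with |- cell2 _ _ _ => ty | |- _ = _ => homeq end.
Ltac cn1 := rewrite ?hass, ?hid, ?hid2, ?hidl, ?hidr.
Ltac cn := repeat (first [progress cn1 | progress hn]).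

Lemma L_rsg : id2 r ∗ sg = id2 t.
Proof.
  apply (Hkan (k := t)); [ty|ty|].
  assert (E : id2 r ∗ al = (id2 r ∗ (sg ∗ id2 l)) · ga).
  { rewrite <- Hsg2. erewrite whl by side. cn. reflexivity. }
  rewrite Hral in E. cn. rewrite <- E. rewrite (vidl Hga). reflexivity.
Qed.

Ltac wd := repeat (first [erewrite whl by side | erewrite whr by side]).
Ltac va := repeat (erewrite vass by side).
Ltac nf := cn; wd; cn; va.
Ltac vi := repeat (first [erewrite vidl by side | erewrite vidr by side]).

Lemma L_s0sg : id2 s0 ∗ sg = eta.
Proof.
  apply (Hkan (k := id1 e)); [ty|ty|].
  assert (E : id2 s0 ∗ al = (id2 s0 ∗ (sg ∗ id2 l)) · ga).
  { rewrite <- Hsg2. erewrite whl by side. cn. reflexivity. }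
  rewrite Hs0al in E. cn. rewrite <- E. rewrite Heta2. reflexivity.
Qed.

Definition Phi {y : Ob A} (h : Hom y e) (be : Cell y e) := (sg ∗ id2 h) · (id2 d1 ∗ be).

Lemma PsiPhi {y : Ob A} (h h' : Hom y e) (be : Cell y e) :
  cell2 be h (t ∘ h') -> id2 r ∗ Phi h' be = be.
Proof.
  intros Hb. unfold Phi. nf. rewrite (hext L_rsg). cn. exact (vidl Hb).
Qed.

Lemma PhiPsi {y : Ob A} (h h' : Hom y e) (be : Cell y P) :
  cell2 be (d1 ∘ h) (d0 ∘ h') -> Phi h' (id2 r ∗ be) = be.
Proof.
  intros Hb. unfold Phi. nf. rewrite <- Hxi0. cn.
  rewrite <- (xchg1 Hb Hxi). rewrite (xchg2 Hb Hxi). cn.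
  rewrite (hext2 Hxi1). cn. exact (vidr Hb).
Qed.

Lemma U {y : Ob A} (h h' : Hom y e) (be : Cell y e) :
  cell2 be h (t ∘ h') -> id2 s0 ∗ Phi h' be = (eta ∗ id2 h') · be.
Proof.
  intros Hb. unfold Phi. nf. rewrite (hext L_s0sg). cn. reflexivity.
Qed.

Lemma EPS {g : Hom e e} (X : Cell e Q) :
  cell2 X (D2 ∘ (d1 ∘ g)) (D0 ∘ d0) -> X = (id2 D0 ∗ sg) · (id2 D2 ∗ (id2 R' ∗ X)).
Proof.
  intros HX. transitivity (eps ∗ X).
  - rewrite (xchg2 HX Heps). rewrite (hext2 Heps2). cn. symmetry. exact (vidr HX).
  - rewrite (xchg1 HX Heps). rewrite (hext2 Heps0). cn. rewrite Hxi0. reflexivity.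
Qed.

Definition Z := (id2 D0 ∗ sg) · (id2 D2 ∗ (sg ∗ id2 t)).

Lemma K : id2 D1 ∗ sg = Z · (id2 (D2 ∘ d1) ∗ m).
Proof.
  assert (H1 := EPS (g := t) (X := id2 D1 ∗ sg) ltac:(ty)).
  assert (H2 := EPS (g := t) (X := Z · (id2 (D2 ∘ d1) ∗ m)) ltac:(unfold Z; ty)).
  etransitivity; [exact H1|]. etransitivity; [|symmetry; exact H2].
  f_equal; f_equal.
  apply (Hkan1 (k := d0 ∘ t)); [unfold Z; ty|unfold Z; ty|].
  assert (E1: (id2 (R' ∘ D1) ∗ (sg ∗ id2 l)) · (id2 d1 ∗ ga) = (id2 d0 ∗ ga) · al).
  { transitivity (id2 (R' ∘ D1) ∗ al).
    - rewrite <- Hsg2. nf. reflexivity.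
    - rewrite <- hid, HD1al. nf. rewrite (hext3 Hral). reflexivity. }
  unfold Z. nf. rewrite E1.
  rewrite (hext (hext3 L_rsg d0)). cn. vi.
  erewrite <- (whl d1 (a := ga) (b := m ∗ id2 l)) by side. rewrite Hm2.
  erewrite whl by side. cn.
  erewrite <- (vass (a := id2 d1 ∗ ga)) by side.
  rewrite <- (xchg1 Hga Hsg). rewrite (xchg2 Hga Hsg). va. rewrite Hsg2. reflexivity.
Qed.

Lemma C1 {y : Ob A} (h : Hom y e) (be : Cell y e) : cell2 be h (t ∘ h) ->
  (id2 D0 ∗ Phi h be) · (id2 D2 ∗ Phi h be) = (Z ∗ id2 h) · (id2 (D2 ∘ d1) ∗ ((id2 t ∗ be) · be)).
Proof.
  intros Hb. assert (HS : cell2 (id2 D2 ∗ sg) (D2 ∘ (d1 ∘ t)) (D2 ∘ d0)) by ty.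
  assert (SW : (id2 (D0 ∘ d1) ∗ be) · (id2 D2 ∗ (sg ∗ id2 h)) =
               (id2 D2 ∗ (sg ∗ id2 (t ∘ h))) · (id2 (D2 ∘ (d1 ∘ t)) ∗ be)).
  { transitivity ((id2 D2 ∗ sg) ∗ be).
    - rewrite (xchg2 Hb HS). cn. reflexivity.
    - rewrite (xchg1 Hb HS). cn. reflexivity. }
  unfold Phi, Z. nf.
  erewrite <- (vass (a := id2 (D2 ∘ d1) ∗ be)) by side.
  rewrite SW. va. reflexivity.
Qed.

Lemma C2 {y : Ob A} (h : Hom y e) (be : Cell y e) : cell2 be h (t ∘ h) ->
  id2 D1 ∗ Phi h be = (Z ∗ id2 h) · (id2 (D2 ∘ d1) ∗ ((m ∗ id2 h) · be)).
Proof.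
  intros Hb. unfold Phi. erewrite whl by side. rewrite (hext K).
  unfold Z. nf. reflexivity.
Qed.

Lemma C3 {y : Ob A} (h : Hom y e) (X : Cell y e) : cell2 X h (t ∘ (t ∘ h)) ->
  id2 (r ∘ R') ∗ ((Z ∗ id2 h) · (id2 (D2 ∘ d1) ∗ X)) = X.
Proof.
  intros HX. unfold Z. nf.
  rewrite (hext (hext3 L_rsg t)). rewrite (hext L_rsg). cn. vi. reflexivity.
Qed.

Definition CoAlg {y : Ob A} (h : Hom y e) (be : Cell y e) :=
  cell2 be h (t ∘ h) /\ (id2 t ∗ be) · be = (m ∗ id2 h) · be /\ (eta ∗ id2 h) · be = id2 h.

Lemma coalg_desc {y : Ob A} (h : Hom y e) (be : Cell y e) :
  CoAlg h be -> DescDatum d0 d1 D0 D1 D2 s0 h (Phi h be).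
Proof.
  intros [Hb [Hc Hu]]. split; [|split].
  - unfold Phi; ty.
  - rewrite (C1 Hb), (C2 Hb), Hc. reflexivity.
  - rewrite (U Hb). exact Hu.
Qed.

Lemma desc_coalg {y : Ob A} (h : Hom y e) (be : Cell y P) :
  DescDatum d0 d1 D0 D1 D2 s0 h be -> CoAlg h (id2 r ∗ be).
Proof.
  intros [Hb [Hc Hu]].
  assert (Hb' : cell2 (id2 r ∗ be) h (t ∘ h)) by ty.
  assert (E := PhiPsi Hb). split; [exact Hb'|split].
  - rewrite <- E in Hc. rewrite (C1 Hb'), (C2 Hb') in Hc.
    apply (f_equal (fun X => id2 (r ∘ R') ∗ X)) in Hc.
    rewrite (C3 (X := (id2 t ∗ (id2 r ∗ be)) · (id2 r ∗ be))) in Hc by ty.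
    rewrite (C3 (X := (m ∗ id2 h) · (id2 r ∗ be))) in Hc by ty.
    exact Hc.
  - rewrite <- E in Hu. rewrite (U Hb') in Hu. exact Hu.
Qed.

Lemma M1 {y : Ob A} (h0 h1 : Hom y e) (b0 x : Cell y e) :
  cell2 b0 h0 (t ∘ h0) -> cell2 x h1 h0 ->
  (Phi h0 b0) · (id2 d1 ∗ x) = Phi h0 (b0 · x).
Proof. intros H0 Hx. unfold Phi. nf. reflexivity. Qed.

Lemma M2 {y : Ob A} (h0 h1 : Hom y e) (b1 x : Cell y e) :
  cell2 b1 h1 (t ∘ h1) -> cell2 x h1 h0 ->
  (id2 d0 ∗ x) · (Phi h1 b1) = Phi h0 ((id2 t ∗ x) · b1).
Proof.
  intros H1 Hx. unfold Phi. nf.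
  erewrite <- (vass (a := id2 d1 ∗ b1)) by side.
  rewrite <- (xchg2 Hx Hsg), (xchg1 Hx Hsg). cn. va. reflexivity.
Qed.

Lemma mor_iff {y : Ob A} (h0 h1 : Hom y e) (b0 b1 x : Cell y e) :
  cell2 b0 h0 (t ∘ h0) -> cell2 b1 h1 (t ∘ h1) -> cell2 x h1 h0 ->
  (b0 · x = (id2 t ∗ x) · b1 <->
   (Phi h0 b0) · (id2 d1 ∗ x) = (id2 d0 ∗ x) · (Phi h1 b1)).
Proof.
  intros H0 H1 Hx. rewrite (M1 H0 Hx), (M2 H1 Hx). split.
  - intros E; rewrite E; reflexivity.
  - intros E. apply (f_equal (fun X => id2 r ∗ X)) in E.
    rewrite (PsiPhi (h := h1)) in E by ty. rewrite (PsiPhi (h := h1)) in E by ty. exact E.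
Qed.

Lemma Phi_wh {y w : Ob A} (h : Hom y e) (be : Cell y e) (g : Hom w y) f :
  cell2 be f (t ∘ h) -> Phi h be ∗ id2 g = Phi (h ∘ g) (be ∗ id2 g).
Proof. intros Hb. unfold Phi. nf. reflexivity. Qed.

Lemma F1 {X : Ob A} (u : Hom X e) (mu : Cell X e) :
  @EMObject (co A) e t m eta X u mu -> LaxDescentObject d0 d1 D0 D1 D2 s0 X u (Phi u mu).
Proof.
  unfold EMObject, Algebra. cbn. intros [[[Hm1 Hm0] [Hmc Hmu]] HU].
  assert (Hmu0 : cell2 mu u (t ∘ u)) by (split; assumption).
  assert (HCA : CoAlg u mu) by (repeat split; assumption).
  split; [apply coalg_desc; exact HCA|].
  intros y. destruct (HU y) as [HU1 HU2]. split.
  - intros h be HD'. destruct (desc_coalg HD') as [Hb [Hc Hu']].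
    destruct (HU1 h (id2 r ∗ be)) as [g [[Hg1 Hg2] Hgu]].
    { destruct Hb. cbn. repeat split; assumption. }
    exists g. split; [split|].
    + exact Hg1.
    + erewrite Phi_wh by side. rewrite Hg2, Hg1. apply PhiPsi with (h := h). destruct HD' as [Hbe _]; exact Hbe.
    + intros g' [Hg1' Hg2']. apply Hgu. split; [exact Hg1'|].
      rewrite <- Hg2'. erewrite Phi_wh by side. erewrite PsiPhi by side. reflexivity.
  - intros g1 g0 x Hx' Hcond.
    destruct (HU2 g0 g1 x) as [ze [[[Hz1 Hz2] Hz3] Hzu]].
    { destruct Hx'; split; assumption. }
    { apply (mor_iff (h0 := u ∘ g0) (h1 := u ∘ g1)); [ty|ty|exact Hx'|].
      erewrite <- !Phi_wh by side. exact Hcond. }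
    exists ze. split; [split; [split; assumption | assumption]|].
    intros ze' [[Hz1' Hz2'] Hz3']. apply Hzu. cbn. split; [split; assumption | assumption].
Qed.

Lemma F2 {L : Ob A} (d : Hom L e) (Ps : Cell L P) :
  LaxDescentObject d0 d1 D0 D1 D2 s0 L d Ps -> @EMObject (co A) e t m eta L d (id2 r ∗ Ps).
Proof.
  intros [HDD HU]. assert (HPs : cell2 Ps (d1 ∘ d) (d0 ∘ d)) by (destruct HDD; assumption).
  destruct (desc_coalg HDD) as [[Hb1 Hb2] [Hc Hu]].
  unfold EMObject, Algebra. cbn.
  split; [repeat split; assumption|].
  intros y. destruct (HU y) as [HU1 HU2]. split.
  - intros h be [[Hbe1 Hbe2] [Hbc Hbu]].
    assert (Hbe : cell2 be h (t ∘ h)) by (split; assumption).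
    assert (HCA : CoAlg h be) by (repeat split; assumption).
    destruct (HU1 h (Phi h be) (coalg_desc HCA)) as [g [[Hg1 Hg2] Hgu]].
    exists g. split; [split|].
    + exact Hg1.
    + rewrite hass, Hg2. apply PsiPhi with (h := h). exact Hbe.
    + intros g' [Hg1' Hg2']. apply Hgu. split; [exact Hg1'|].
      rewrite <- Hg2', hass, <- Hg1'. symmetry. apply PhiPsi with (h := d ∘ g'). ty.
  - intros g1 g0 x [Hx1 Hx0] Hcond.
    assert (Hx : cell2 x (d ∘ g0) (d ∘ g1)) by (split; assumption).
    destruct (HU2 g0 g1 x Hx) as [ze [[Hz Hz3] Hzu]].
    { assert (E1 : Ps ∗ id2 g1 = Phi (d ∘ g1) (id2 r ∗ (Ps ∗ id2 g1)))
        by (symmetry; apply PhiPsi with (h := d ∘ g1); ty).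
      assert (E0 : Ps ∗ id2 g0 = Phi (d ∘ g0) (id2 r ∗ (Ps ∗ id2 g0)))
        by (symmetry; apply PhiPsi with (h := d ∘ g0); ty).
      rewrite E1, E0. apply (mor_iff (h0 := d ∘ g1) (h1 := d ∘ g0)); [ty|ty|exact Hx|].
      rewrite !hass in Hcond. exact Hcond. }
    exists ze. destruct Hz as [Hz1 Hz2]. split; [split; [split; assumption | assumption]|].
    intros ze' [[Hz1' Hz2'] Hz3']. apply Hzu. split; [split; assumption | assumption].
Qed.

Lemma uniq_ex {T : Type} (Pr : T -> Prop) (x1 x2 : T) : (exists! x, Pr x) -> Pr x1 -> Pr x2 -> x1 = x2.
Proof. intros [x [Hx Hu]] Ha Hb. rewrite <- (Hu x1 Ha). apply Hu. exact Hb. Qed.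

Lemma FINAL :
  ((exists (X : Ob A) (u : Hom X e) (c : Hom b X), CoSemFact l t ga m eta X u c) <->
   (exists (L : Ob A) (d : Hom L e) (c : Hom b L),
       LaxDescFact l P d0 d1 al Q D0 D1 D2 s0 L d c)) /\
  (forall (X : Ob A) (u : Hom X e) (c : Hom b X) (L : Ob A) (d : Hom L e) (c' : Hom b L),
     CoSemFact l t ga m eta X u c ->
     LaxDescFact l P d0 d1 al Q D0 D1 D2 s0 L d c' ->
     FactIso X L u c d c').
Proof.
  assert (KEY : forall (X : Ob A) (u : Hom X e) (c : Hom b X) (mu : Cell X e), @EMObject (co A) e t m eta X u mu ->
            u ∘ c = l -> mu ∗ id2 c = ga -> Phi u mu ∗ id2 c = al).
  { intros X u c mu HEM Huc Hmc.
    destruct HEM as [[[Hm1 Hm0] _] _]. cbn in Hm1, Hm0.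
    assert (Hmu0 : cell2 mu u (t ∘ u)) by (split; [exact Hm0|exact Hm1]).
    erewrite Phi_wh by side. rewrite Huc, Hmc. exact Hsg2. }
  split; [split|].
  - intros [X [u [c [mu [HEM [Huc Hmc]]]]]]. exists X, u, c, (Phi u mu).
    split; [apply F1; exact HEM|split]; [exact Huc|].
    apply (KEY X u c mu HEM Huc Hmc).
  - intros [L [d [c [Ps [HL [Hdc HPc]]]]]]. exists L, d, c, (id2 r ∗ Ps).
    split; [apply F2; exact HL|split]; [exact Hdc|].
    change ((id2 r ∗ Ps) ∗ id2 c = ga). rewrite hass, HPc. exact Hral.
  - intros X u c L d c' [mu [HEM [Huc Hmc]]] [Ps [HL [Hdc HPc]]].
    change (u ∘ c = l) in Huc. change (mu ∗ id2 c = ga) in Hmc.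
    assert (Hal' := KEY X u c mu HEM Huc Hmc).
    assert (HX := F1 HEM). set (Ps' := Phi u mu) in *.
    destruct HX as [HXD HXU]. destruct HL as [HLD HLU].
    destruct (proj1 (HLU X) u Ps' HXD) as [phi [[Hp1 Hp2] _]].
    destruct (proj1 (HXU L) d Ps HLD) as [psi [[Hq1 Hq2] _]].
    exists phi, psi. split; [|split; [|split]].
    + apply (uniq_ex (proj1 (HXU X) u Ps' HXD)).
      * split.
        -- rewrite <- cassoc, Hq1, Hp1. reflexivity.
        -- rewrite <- hid2, <- hass, Hq2, Hp2. reflexivity.
      * split; [apply cidr|apply hidr].
    + apply (uniq_ex (proj1 (HLU L) d Ps HLD)).
      * split.
        -- rewrite <- cassoc, Hp1, Hq1. reflexivity.
        -- rewrite <- hid2, <- hass, Hp2, Hq2. reflexivity.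
      * split; [apply cidr|apply hidr].
    + exact Hp1.
    + assert (HDl : DescDatum d0 d1 D0 D1 D2 s0 l al).
      { split; [exact Hal|split; [symmetry; exact HD1al|exact Hs0al]]. }
      apply (uniq_ex (proj1 (HLU b) l al HDl)).
      * split.
        -- rewrite <- cassoc, Hp1. exact Huc.
        -- rewrite <- hid2, <- hass, Hp2. exact Hal'.
      * split; [exact Hdc|exact HPc].
Qed.
End Inner.

Set Strict Implicit.
Ltac hnc := repeat progress (rewrite ?cassoc, ?cidl, ?cidr;
  repeat match goal with H : _ ∘ _ = _ |- _ => progress rewrite ?H, ?(ext1 H) end).
Ltac homeqc := hnc; reflexivity.
Ltac tyc := eapply c_conv; [infer | ..]; homeqc.

Theorem theorem4p9 (A : TwoCat) (b e : Ob A) (l : Hom b e)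
    (P : Ob A) (d0 d1 : Hom e P) (al : Cell b P)
    (Q : Ob A) (D0 D1 D2 : Hom P Q) (s0 : Hom P e)
    (t : Hom e e) (ga : Cell b e) (m eta : Cell e e) :
  CokernelDiagram l P d0 d1 al Q D0 D1 D2 s0 ->
  LeftKan l l t ga ->
  PreservesLeftKan d1 l l t ga ->
  DensityComonad l t ga m eta ->
  ((exists (X : Ob A) (u : Hom X e) (c : Hom b X), CoSemFact l t ga m eta X u c) <->
   (exists (L : Ob A) (d : Hom L e) (c : Hom b L),
       LaxDescFact l P d0 d1 al Q D0 D1 D2 s0 L d c)) /\
  (forall (X : Ob A) (u : Hom X e) (c : Hom b X) (L : Ob A) (d : Hom L e) (c' : Hom b L),
     CoSemFact l t ga m eta X u c ->
     LaxDescFact l P d0 d1 al Q D0 D1 D2 s0 L d c' ->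
     FactIso X L u c d c').
Proof.
  intros [[Hal HOCU] [[HD HPOU] [[HD1d1 [HD1d0 HD1al]] [Hs0d0 [Hs0d1 Hs0al]]]]] HK HPK HDC.
  unfold LeftKan, RightKan, cell2 in HK. cbn in HK. destruct HK as [[Hg1 Hg0] HKU].
  assert (Hga : cell2 ga l (t ∘ l)) by (split; [exact Hg0|exact Hg1]).
  unfold PreservesLeftKan, PreservesRightKan, RightKan, cell2 in HPK. cbn in HPK.
  destruct HPK as [_ HPU].
  unfold DensityComonad, CodensityMonad, cell2 in HDC. cbn in HDC.
  destruct HDC as [_ [[Hm1 Hm0] [Hm2 [[He1 He0] Heta2]]]].
  assert (Hm : cell2 m t (t ∘ t)) by (split; [exact Hm0|exact Hm1]).
  assert (Heta : cell2 eta t (id1 e)) by (split; [exact He0|exact He1]).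
  assert (Hkan : forall (k : Hom e e) (b1 b2 : Cell e e), cell2 b1 t k -> cell2 b2 t k ->
    (b1 ∗ id2 l) · ga = (b2 ∗ id2 l) · ga -> b1 = b2).
  { intros k b1 b2 H1 H2 E.
    assert (Ht : cell2 ((b1 ∗ id2 l) · ga) l (k ∘ l)) by tyc.
    destruct Ht as [Ht0 Ht1].
    apply (uniq_ex (HKU k _ (conj Ht1 Ht0))).
    - split; [destruct H1; split; assumption | reflexivity].
    - split; [destruct H2; split; assumption | symmetry; exact E]. }
  assert (Hkan1 : forall (k : Hom e P) (b1 b2 : Cell e P), cell2 b1 (d1 ∘ t) k -> cell2 b2 (d1 ∘ t) k ->
    (b1 ∗ id2 l) · (id2 d1 ∗ ga) = (b2 ∗ id2 l) · (id2 d1 ∗ ga) -> b1 = b2).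
  { intros k b1 b2 H1 H2 E.
    assert (Ht : cell2 ((b1 ∗ id2 l) · (id2 d1 ∗ ga)) (d1 ∘ l) (k ∘ l)) by tyc.
    destruct Ht as [Ht0 Ht1].
    apply (uniq_ex (HPU k _ (conj Ht1 Ht0))).
    - split; [destruct H1; split; assumption | reflexivity].
    - split; [destruct H2; split; assumption | symmetry; exact E]. }
  destruct Hal as [Hal0 Hal1].
  destruct (HPU d0 al (conj Hal1 Hal0)) as [sg [[[Hs1 Hs0] Hsg2] _]].
  assert (Hal : cell2 al (d1 ∘ l) (d0 ∘ l)) by (split; assumption).
  assert (Hsg : cell2 sg (d1 ∘ t) d0) by (split; [exact Hs0|exact Hs1]).
  destruct (proj1 (HOCU e) t (id1 e) ga ltac:(tyc)) as [r [[Hrd0 [Hrd1 Hral]] _]].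
  destruct (proj2 (HOCU P) (d1 ∘ r) (id1 P) sg (id2 d1) ltac:(tyc) ltac:(tyc)) as [xi [[Hxi [Hxi0 Hxi1]] _]].
  { rewrite (hext3 Hral), Hsg2, hidl, hid2. symmetry. exact (vidr Hal). }
  destruct (proj1 (HPOU P) (id1 P) (d0 ∘ r) ltac:(homeqc)) as [R' [[HR2 HR0] _]].
  destruct (proj2 (HPOU Q) (D2 ∘ R') (id1 Q) (id2 D2) (id2 D0 ∗ xi) ltac:(tyc) ltac:(tyc)) as [eps [[Heps [Heps2 Heps0]] _]].
  { rewrite hass, Hxi1, !hid2, HD. reflexivity. }
  exact (FINAL (r:=r) (sg:=sg) (xi:=xi) (R':=R') (eps:=eps) Hal Hs0d0 Hs0d1 Hs0al HD HD1d1 HD1d0 HD1al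
           Hga Hkan Hkan1 Hm Hm2 Heta Heta2 Hrd0 Hrd1 Hral Hsg Hsg2 Hxi Hxi0 Hxi1 HR2 HR0 Heps Heps2 Heps0).
Qed.
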